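(* Let $\mathcal{G}$ be a $2$-$(n,b,k,r,\lambda)$ design. Then \[ \frac{n\lambda}{k}\leq e(\mathcal{G})\leq\frac{(n-1)\lambda}{k-1}. \] Moreover, if $\mathcal{G}$ is a symmetric design, then $e(\mathcal{G})=k=r$.
   Context: A $2$-$(n,b,k,r,\lambda)$ design is regarded as a $k$-uniform $r$-regular hypergraph $\mathcal{G}$ on $n$ vertices with $b$ edges (edges are $k$-element vertex subsets) such that every pair of distinct vertices lies in exactly $\lambda$ common edges. It is symmetric if $n=b$. For a proper nonempty $S\subset V(\mathcal{G})$ with $\overline{S}=V(\mathcal{G})\setminus S$, $E(S,\overline{S})$ is the set of edges containing vertices of both $S$ and $\overline{S}$; the edge connectivity $e(\mathcal{G})$ is the minimum of $|E(S,\overline{S})|$ over all proper nonempty $S$. *)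

(* Defs.v *)
From mathcomp Require Import all_boot all_order all_algebra.
Set Implicit Arguments. Unset Strict Implicit. Unset Printing Implicit Defensive.

(* A hypergraph on the finite vertex type T is a set of edges E : {set {set T}}.
   n = #|T|, b = #|E|. *)

Definition design (T : finType) (E : {set {set T}}) (k r lam : nat) : Prop :=
  [/\ forall e, e \in E -> #|e| = k,
      forall v : T, #|[set e in E | v \in e]| = r
    & forall u v : T, u != v -> #|[set e in E | (u \in e) && (v \in e)]| = lam].

Definition cut (T : finType) (E : {set {set T}}) (S : {set T}) : {set {set T}} :=
  [set e in E | (e :&: S != set0) && (e :\: S != set0)].

(* The neutral element #|E| is an upper bound for every cut size, so the
   value is the true minimum whenever a proper nonempty S exists (#|T| >= 2). *)
Definition edge_conn (T : finType) (E : {set {set T}}) : nat :=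
  \big[minn/#|E|]_(S : {set T} | (S != set0) && (S != setT)) #|cut E S|.

(* Main.v *)
Require Import Defs.
From mathcomp Require Import all_boot all_order all_algebra.
From mathcomp Require Import zify.
Import Order.TTheory GRing.Theory Num.Theory.
Set Implicit Arguments. Unset Strict Implicit.

Section S.
Variable T : finType.

Lemma card_sumP (U : finType) (A : {set U}) (P : pred U) :
  #|[set x in A | P x]| = \sum_(x in A) P x.
Proof.
rewrite -sum1_card big_mkcond /= [RHS]big_mkcond /=.
apply: eq_bigr => x _; rewrite inE; by case: (x \in A); case: (P x).
Qed.

Lemma dcount (E : {set {set T}}) (S : {set T}) :
  \sum_(u in S) \sum_(v in ~: S) #|[set e in E | (u \in e) && (v \in e)]|
  = \sum_(e in E) #|e :&: S| * #|e :\: S|.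
Proof.
under eq_bigr => u _ do under eq_bigr => v _ do rewrite card_sumP.
under eq_bigr => u _ do rewrite exchange_big.
rewrite exchange_big; apply: eq_bigr => e _.
have -> : e :&: S = [set x in S | x \in e] by apply/setP => x; rewrite !inE andbC.
have -> : e :\: S = [set x in ~: S | x \in e] by apply/setP => x; rewrite !inE andbC.
rewrite !card_sumP big_distrl /=; apply: eq_bigr => u _.
rewrite big_distrr /=; apply: eq_bigr => v _.
by rewrite mulnb.
Qed.

Lemma dcount2 (E : {set {set T}}) :
  \sum_v #|[set e in E | v \in e]| = \sum_(e in E) #|e|.
Proof.
under eq_bigr => v _ do rewrite card_sumP.
rewrite exchange_big; apply: eq_bigr => e _.
rewrite -sum1_card [RHS]big_mkcond /=; apply: eq_bigr => x _.
by case: (x \in e).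
Qed.

Lemma key a b s t : a <= s -> b <= t -> a * b * (s + t) <= (a + b) * (s * t).
Proof.
move=> /subnKC <- /subnKC <-.
move: (s - a) (t - b) => x y.
nia.
Qed.


Lemma cardI1 (e : {set T}) v : #|e :&: [set v]| = (v \in e).
Proof. by have := cardsID [set v] e; rewrite (cardsD1 v e) => /eqP; rewrite eqn_add2r => /eqP. Qed.

Variables (E : {set {set T}}) (k r lam : nat).
Hypothesis hk : 2 <= k.
Hypothesis D : design E k r lam.

Lemma cut_sub S : #|cut E S| <= #|E|.
Proof. by apply: subset_leq_card; apply/subsetP => e; rewrite inE => /andP[]. Qed.

Lemma cut1 v : cut E [set v] = [set e in E | v \in e].
Proof.
case: D => hE _ _.
apply/setP => e; rewrite !inE.
case eE: (e \in E) => //=.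
rewrite -!card_gt0 cardI1.
case ve: (v \in e) => //=.
have := cardsD1 v e; rewrite ve hE //; lia.
Qed.

Lemma rk (v : T) : r * (k - 1) = lam * (#|T| - 1).
Proof.
case: D => hE hr hl.
have := dcount E [set v]; rewrite big_set1.
under eq_bigr => w hw.
  rewrite hl; last by move: hw; rewrite !inE eq_sym.
  over.
rewrite sum_nat_const cardsC1.
under [RHS]eq_bigr => e he.
  rewrite cardI1.
  have -> : #|e :\: [set v]| = #|e| - (v \in e) by have := cardsD1 v e; lia.
  rewrite hE //.
  have -> : (v \in e) * (k - (v \in e)) = (v \in e) * (k - 1).
    by case: (v \in e); rewrite ?mul0n ?mul1n.
  over.
rewrite -big_distrl /= -card_sumP hr => H.
lia.
Qed.

Lemma bk : #|T| * r = #|E| * k.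
Proof.
case: D => hE hr hl.
have := dcount2 E.
under eq_bigr => v _ do rewrite hr.
under [RHS]eq_bigr => e he do rewrite hE //.
by rewrite !sum_nat_const.
Qed.

Lemma cut_bound S : S != set0 -> S != setT -> #|T| * lam <= k * #|cut E S|.
Proof.
case: D => hE hr hl.
move=> S0 ST.
have s0 : 0 < #|S| by rewrite card_gt0.
have t0 : 0 < #|~: S|.
  rewrite card_gt0; apply: contra ST => /eqP h.
  by rewrite -(setCK S) h setC0.
have hst := cardsC S.
have := dcount E S.
under eq_bigr => u hu.
  under eq_bigr => w hw.
    rewrite hl; last first.
      by apply: contraTneq hw => <-; rewrite inE hu.
    over.
  rewrite sum_nat_const.
  over.
rewrite sum_nat_const => H.
have H2 : \sum_(e in E) #|e :&: S| * #|e :\: S| * #|T| <=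
          \sum_(e in E) (e \in cut E S) * (k * (#|S| * #|~: S|)).
  apply: leq_sum => e he.
  rewrite inE he /=.
  have ha : #|e :&: S| <= #|S| by apply: subset_leq_card; exact: subsetIr.
  have hb : #|e :\: S| <= #|~: S|.
    by apply: subset_leq_card; apply/subsetP => x; rewrite !inE => /andP[].
  have hk' := cardsID S e; rewrite (hE e he) in hk'.
  case: (boolP (e :&: S != set0)) => /= h1; last first.
    by move: h1; rewrite negbK => /eqP ->; rewrite cards0.
  case: (boolP (e :\: S != set0)) => /= h2; last first.
    by move: h2; rewrite negbK => /eqP ->; rewrite cards0 muln0.
  rewrite mul1n -hst -hk'; exact: key.
rewrite -big_distrl /= -big_distrl /= in H2.
have hc : \sum_(i in E) (i \in cut E S) = #|cut E S|.
  rewrite -sum1_card [RHS]big_mkcond [LHS]big_mkcond; apply: eq_bigr => i _.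
  by rewrite /cut inE; case: (i \in E).
rewrite hc -H in H2.
have P0 : 0 < #|S| * #|~: S| by rewrite muln_gt0 s0.
rewrite -(leq_pmul2r P0).
move: H2; set s := #|S|; set t := #|~: S|; set c := #|cut E S|; set n := #|T|.
move=> H2. 
have -> : n * lam * (s * t) = s * (t * lam) * n by rewrite mulnC mulnCA (mulnC _ n) !mulnA.
apply: (leq_trans H2); by rewrite mulnA (mulnC c).
Qed.

End S.

Lemma ec_le (T : finType) (E : {set {set T}}) S :
  S != set0 -> S != setT -> edge_conn E <= #|cut E S|.
Proof.
move=> h1 h2; rewrite /edge_conn.
have : S \in index_enum {set T} by rewrite mem_index_enum.
elim: (index_enum _) => //= a l IH; rewrite in_cons big_cons.
case/orP => [/eqP <- | h].
  by rewrite h1 h2 /=; exact: geq_minl.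
case: ifP => _; last exact: IH.
by apply: leq_trans (geq_minr _ _) (IH h).
Qed.

Local Open Scope ring_scope.

Theorem theorem3p9 (T : finType) (E : {set {set T}}) (k r lam : nat) :
  (1 < #|T|)%N -> (2 <= k)%N -> design E k r lam ->
  [/\ ((#|T| * lam)%:R / k%:R <= (edge_conn E)%:R :> rat),
      ((edge_conn E)%:R <= ((#|T| - 1) * lam)%:R / (k - 1)%:R :> rat)
    & (#|T| = #|E| -> edge_conn E = k /\ k = r)].
Proof.
move=> hn hk D.
have /card_gt0P [v _] : (0 < #|T|)%N by lia.
have v0 : [set v] != set0 by apply/set0Pn; exists v; rewrite inE.
have vT : [set v] != setT.
  apply/eqP => h; have := cardsT T; rewrite -h cards1; lia.
have hr1 : #|cut E [set v]| = r by rewrite (cut1 hk D); case: D.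
have hup : (edge_conn E <= r)%N by rewrite -hr1; exact: ec_le.
have hrk := rk hk D v.
have hlow : (#|T| * lam <= k * edge_conn E)%N.
  rewrite /edge_conn; apply: (big_ind (fun x => (#|T| * lam <= k * x)%N)).
  - apply: (leq_trans (cut_bound D v0 vT)); by rewrite leq_mul2l cut_sub orbT.
  - move=> x y hx hy; rewrite /minn; by case: ifP.
  - move=> S /andP[h1 h2]. exact (cut_bound D h1 h2).
split.
- rewrite ler_pdivrMr ?ltr0n; last by lia.
  rewrite -natrM ler_nat; lia.
- rewrite ler_pdivlMr ?ltr0n; last by lia.
  by rewrite -natrM ler_nat (mulnC _ lam) -hrk leq_mul2r hup orbT.
- move=> hb.
  have hbk := bk D; rewrite -hb in hbk.
  have rk' : r = k by apply/eqP; rewrite -(eqn_pmul2l (_ : (0 < #|T|)%N)) ?hbk //; lia.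
  subst r; split => //.
  nia.
Qed.
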